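(* Let $n\ge1$. (i) Any $k\ge1$ points of $A_n$ have, altogether, at least $k$ coordinates that are not coordinates of any point of $D_{n-1}$. (ii) For any single point $a_i\in D_{n-1}$, any $k\ge1$ points of $A_n$ have, altogether, at least $k+1$ coordinates that are not coordinates of $a_i$.
   Context: Let $X_1,X_2,X_3$ be pairwise disjoint nonempty sets and $\Omega=X_1\times X_2\times X_3$, with projections $\Pi_i:\Omega\to X_i$. For $S\subset\Omega$, the coordinates of $S$ are the elements of $\Pi_1S\cup\Pi_2S\cup\Pi_3S$. Construction: fix pairwise distinct elements $x_1,y_1,\alpha_{5k-4},\alpha_{5k-1}$ ($k\ge1$) of $X_1$; pairwise distinct elements $x_2,y_2,\alpha_{5k-3},\alpha_{5k}$ ($k\ge1$) of $X_2$; pairwise distinct elements $x_3,z_3,\alpha_{5k-2}$ ($k\ge1$) of $X_3$. Set the convention $\alpha_{-3}:=y_2$, $\alpha_{-2}:=z_3$. Define $a_1=(x_1,x_2,x_3)$, $a_2=(y_1,y_2,x_3)$, $a_3=(y_1,x_2,z_3)$ and for $n\ge1$: $a_{5n-1}=(\alpha_{5n-4},\alpha_{5n-3},\alpha_{5n-2})$, $a_{5n}=(\alpha_{5n-1},\alpha_{5n},\alpha_{5n-2})$, $a_{5n+1}=(\alpha_{5n-4},\alpha_{5n},\alpha_{5n-7})$, $a_{5n+2}=(\alpha_{5n-1},\alpha_{5n-3},x_3)$, $a_{5n+3}=(x_1,\alpha_{5n-8},\alpha_{5n-2})$. Let $T=\{a_i:i\ge1\}$, $D_n=\{a_1,\dots,a_{5n+3}\}$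 for $n\ge0$, $A_0=D_0$ and $A_n=D_n\setminus D_{n-1}$ for $n\ge1$. *)

(* Defs.v *)
From mathcomp Require Import all_boot.
Set Implicit Arguments. Unset Strict Implicit. Unset Printing Implicit Defensive.

Section Construction.
Variables (X1 X2 X3 : eqType).

Definition Omega := (X1 * X2 * X3)%type.
(* Coordinates live in the disjoint union X1 + X2 + X3 (the X_i are pairwise
   disjoint, so their union is their disjoint union). *)
Definition Coord := ((X1 + X2) + X3)%type.

Definition coords_pt (p : Omega) : seq Coord :=
  [:: inl (inl p.1.1); inl (inr p.1.2); inr p.2].

Definition coords (S : seq Omega) : seq Coord := undup (flatten (map coords_pt S)).

Variables (x1 y1 : X1) (x2 y2 : X2) (x3 z3 : X3).
(* alpha_m for m = 1,4 mod 5 is al1 m : X1; m = 2,0 mod 5 is al2 m : X2;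
   m = 3 mod 5 is al3 m : X3 (values at other indices are irrelevant). *)
Variables (al1 : nat -> X1) (al2 : nat -> X2) (al3 : nat -> X3).

(* alpha_{5n-7} (an X3 element), with alpha_{-2} := z3 *)
Definition al3m7 (n : nat) : X3 := if n == 1 then z3 else al3 (5 * n - 7).
(* alpha_{5n-8} (an X2 element), with alpha_{-3} := y2 *)
Definition al2m8 (n : nat) : X2 := if n == 1 then y2 else al2 (5 * n - 8).

(* pt n r = a_{5n-1+r} for n >= 1, r < 5 *)
Definition pt (n r : nat) : Omega :=
  match r with
  | 0 => (al1 (5*n-4), al2 (5*n-3), al3 (5*n-2))
  | 1 => (al1 (5*n-1), al2 (5*n), al3 (5*n-2))
  | 2 => (al1 (5*n-4), al2 (5*n), al3m7 n)
  | 3 => (al1 (5*n-1), al2 (5*n-3), x3)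
  | _ => (x1, al2m8 n, al3 (5*n-2))
  end.

Definition a (i : nat) : Omega :=
  match i with
  | 1 => (x1, x2, x3)
  | 2 => (y1, y2, x3)
  | 3 => (y1, x2, z3)
  | _ => pt ((i + 1) %/ 5) ((i + 1) %% 5)
  end.

Definition D (n : nat) : seq Omega := [seq a i | i <- iota 1 (5 * n + 3)].
Definition A (n : nat) : seq Omega :=
  if n == 0 then D 0 else [seq p <- D n | p \notin D n.-1].

End Construction.

(* Main.v *)
Require Import Defs.
From mathcomp Require Import all_boot.
From Stdlib Require Import Lia.
Set Implicit Arguments. Unset Strict Implicit.

Ltac nlia0 :=
 try match goal with |- is_true (_ <= _) => apply/leP
   | |- is_true (_ < _) => apply/ltP
   | |- is_true (_ != _) => apply/eqP
   | |- is_true (_ == _) => apply/eqP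
   | |- is_true false => apply/negP; move=> _ end;
 repeat match goal with
 | H : is_true (_ && _) |- _ => apply (elimT andP) in H; destruct H
 | H : is_true (_ <= _) |- _ => apply (elimT leP) in H; revert H
 | H : is_true (_ < _) |- _ => apply (elimT ltP) in H; revert H
 | H : is_true (@eq_op nat _ _) |- _ => apply (elimT eqP) in H; revert H
 | H : is_true (~~ (@eq_op nat _ _)) |- _ => apply (elimN eqP) in H; revert H
 | H : @eq nat _ _ |- _ => revert H
 | H : ~ (@eq nat _ _) |- _ => revert H
 | H : le _ _ |- _ => revert H
 | H : lt _ _ |- _ => revert H
 end;
 rewrite -?subn1 -?plusE -?minusE -?multE; intros; lia.
Ltac nlia := match goal with |- is_true (_ && _) => apply/andP; split; nlia | _ => nlia0 end.

Lemma coordsP (X1 X2 X3 : eqType) (S : seq (Omega X1 X2 X3)) c :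
  reflect (exists2 p, p \in S & c \in coords_pt p) (c \in coords S).
Proof. rewrite /coords mem_undup; exact: flatten_mapP. Qed.

Lemma mod5 k j : j < 5 -> (k * 5 + j) %% 5 = j.
Proof. by move=> H; rewrite modnMDl modn_small. Qed.
Lemma M1 k : 1 <= k -> (5 * k - 4) %% 5 = 1.
Proof. by move=> H; rewrite (_ : 5 * k - 4 = (k-1)*5 + 1) ?mod5 //; nlia. Qed.
Lemma M2 k : 1 <= k -> (5 * k - 3) %% 5 = 2.
Proof. by move=> H; rewrite (_ : 5 * k - 3 = (k-1)*5 + 2) ?mod5 //; nlia. Qed.
Lemma M3 k : 1 <= k -> (5 * k - 2) %% 5 = 3.
Proof. by move=> H; rewrite (_ : 5 * k - 2 = (k-1)*5 + 3) ?mod5 //; nlia. Qed.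
Lemma M4 k : 1 <= k -> (5 * k - 1) %% 5 = 4.
Proof. by move=> H; rewrite (_ : 5 * k - 1 = (k-1)*5 + 4) ?mod5 //; nlia. Qed.
Lemma M0 k : (5 * k) %% 5 = 0.
Proof. by rewrite mulnC modnMl. Qed.
Lemma M7 k : 2 <= k -> (5 * k - 7) %% 5 = 3.
Proof. by move=> H; rewrite (_ : 5 * k - 7 = (k-2)*5 + 3) ?mod5 //; nlia. Qed.
Lemma M8 k : 2 <= k -> (5 * k - 8) %% 5 = 2.
Proof. by move=> H; rewrite (_ : 5 * k - 8 = (k-2)*5 + 2) ?mod5 //; nlia. Qed.

Lemma hallA (b0 b1 b2 b3 b4 : bool) :
  b0 + (b1 + (b2 + (b3 + (b4 + 0)))) <=
  [|| b0, b2 | false] + ([|| b0, b3 | false] + ([|| b0, b1, b4 | false]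
   + ([|| b1, b3 | false] + ([|| b1, b2 | false] + 0)))).
Proof. by case: b0; case: b1; case: b2; case: b3; case: b4. Qed.

Lemma hallB (b0 b1 b2 b3 b4 g1 g2 g3 g4 : bool) :
  g1 || g2 -> g3 || g4 -> 0 < b0 + (b1 + (b2 + (b3 + (b4 + 0)))) ->
  (b0 + (b1 + (b2 + (b3 + (b4 + 0))))).+1 <=
  [|| b0, b2 | false] + ([|| b0, b3 | false] + ([|| b0, b1, b4 | false]
   + ([|| b1, b3 | false] + ([|| b1, b2 | false] +
   ((b4 && g1) + ((b4 && g2) + ((b3 && g3) + ((b2 && g4) + 0)))))))).
Proof. by case: b0; case: b1; case: b2; case: b3; case: b4; case: g1; case: g2; case: g3; case: g4. Qed.

Lemma or_le2 (b1 b2 e : bool) : (b1 -> e) -> (b2 -> e) -> [|| b1, b2 | false] <= e.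
Proof. by case: b1; case: b2; case: e => // H1 H2; [move: (H1 isT)|move: (H1 isT)|move: (H2 isT)]. Qed.
Lemma or_le3 (b1 b2 b3 e : bool) : (b1 -> e) -> (b2 -> e) -> (b3 -> e) -> [|| b1, b2, b3 | false] <= e.
Proof. by case: b1; case: b2; case: b3; case: e => // H1 H2 H3; [move: (H1 isT)|move: (H1 isT)|move: (H1 isT)|move: (H1 isT)|move: (H2 isT)|move: (H2 isT)|move: (H3 isT)]. Qed.
Lemma and_le (b e g : bool) : (b -> e) -> b && g <= e && g.
Proof. by case: b; case: e; case: g => // H; move: (H isT). Qed.

Lemma in_cpt (X1 X2 X3 : eqType) (u : X1) (v : X2) (w : X3) c :
  c \in coords_pt (u, v, w) -> [\/ c = inl (inl u), c = inl (inr v) | c = inr w].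
Proof. by rewrite !inE => /or3P [] /eqP ->; [constructor 1|constructor 2|constructor 3]. Qed.

Lemma aE (X1 X2 X3 : eqType) (x1 y1 : X1) (x2 y2 : X2) (x3 z3 : X3) al1 al2 al3 i :
  4 <= i -> a x1 y1 x2 y2 x3 z3 al1 al2 al3 i = pt x1 y2 x3 z3 al1 al2 al3 ((i+1)%/5) ((i+1)%%5).
Proof. by case: i => [|[|[|[|i]]]]. Qed.

Lemma inD (X1 X2 X3 : eqType) (x1 y1 : X1) (x2 y2 : X2) (x3 z3 : X3) al1 al2 al3 m p :
  p \in D x1 y1 x2 y2 x3 z3 al1 al2 al3 m ->
  exists2 i, 1 <= i <= 5*m+3 & p = a x1 y1 x2 y2 x3 z3 al1 al2 al3 i.
Proof.
case/mapP => i; rewrite mem_iota => /andP [H1 H2] ->; exists i => //.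
rewrite H1 /=; nlia.
Qed.

Lemma inD' (X1 X2 X3 : eqType) (x1 y1 : X1) (x2 y2 : X2) (x3 z3 : X3) al1 al2 al3 m i :
  1 <= i <= 5*m+3 -> a x1 y1 x2 y2 x3 z3 al1 al2 al3 i \in D x1 y1 x2 y2 x3 z3 al1 al2 al3 m.
Proof.
move=> /andP [H1 H2]; apply: map_f; rewrite mem_iota H1 /=; nlia.
Qed.

Lemma divmod5 i n r : i + 1 = n * 5 + r -> r < 5 -> (i+1) %/ 5 = n /\ (i+1) %% 5 = r.
Proof. move=> -> Hr; by rewrite divnMDl // divn_small // addn0 mod5. Qed.

Lemma F1 (X1 X2 X3 : eqType) (x1 y1 : X1) (x2 y2 : X2) (x3 z3 : X3) al1 al2 al3 n p :
  1 <= n -> p \in A x1 y1 x2 y2 x3 z3 al1 al2 al3 n ->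
  p \in [seq pt x1 y2 x3 z3 al1 al2 al3 n r | r <- iota 0 5].
Proof.
move=> Hn; rewrite /A; case: eqP => [E|_]; first by move: Hn; rewrite E.
rewrite mem_filter => /andP [Hnot /inD [i Hi E]].
case: (leqP i (5 * n.-1 + 3)) => Hle.
  by move: Hnot; rewrite E inD' // Hle andbT; case/andP: Hi.
have H4 : 4 <= i by nlia.
rewrite E aE //.
have [Hq Hr] := @divmod5 i n (i + 1 - 5 * n) ltac:(nlia) ltac:(nlia).
rewrite Hq Hr; apply: map_f; rewrite mem_iota; nlia.
Qed.

Lemma in3 (T : eqType) (c u v w : T) :
  [|| c == u, c == v | c == w] -> [\/ c = u, c = v | c = w].
Proof. by case/or3P => /eqP ->; [constructor 1|constructor 2|constructor 3]. Qed.

Ltac side := first [ nlia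
  | rewrite M1; [by []|nlia] | rewrite M4; [by []|nlia] | rewrite M2; [by []|nlia]
  | rewrite M3; [by []|nlia] | rewrite M0; by [] | rewrite M7; [by []|nlia]
  | rewrite M8; [by []|nlia] ].

Ltac kill H1 H2 H3 N1 N2 N3 E :=
  first
  [ by []
  | refine (_ (H1 _ _ _ _ _ _ E)); first [intros; nlia | side]
  | refine (_ (H2 _ _ _ _ _ _ E)); first [intros; nlia | side]
  | refine (_ (H3 _ _ _ _ _ _ E)); first [intros; nlia | side]
  | match goal with H : ?a <> ?b |- _ => exact (H E) end
  | match goal with H : ?a <> ?b |- _ => exact (H (esym E)) end
  | refine (proj1 (N1 _ _ _) E); side
  | refine (proj2 (N1 _ _ _) E); side
  | refine (proj1 (N1 _ _ _) (esym E)); side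
  | refine (proj2 (N1 _ _ _) (esym E)); side
  | refine (proj1 (N2 _ _ _) E); side
  | refine (proj2 (N2 _ _ _) E); side
  | refine (proj1 (N2 _ _ _) (esym E)); side
  | refine (proj2 (N2 _ _ _) (esym E)); side
  | refine (proj1 (N3 _ _ _) E); side
  | refine (proj2 (N3 _ _ _) E); side
  | refine (proj1 (N3 _ _ _) (esym E)); side
  | refine (proj2 (N3 _ _ _) (esym E)); side ].

Theorem mainTheorem2 (X1 X2 X3 : eqType)
  (x1 y1 : X1) (x2 y2 : X2) (x3 z3 : X3)
  (al1 : nat -> X1) (al2 : nat -> X2) (al3 : nat -> X3)
  (Hxy1 : x1 != y1)
  (Hal1 : forall m m', 0 < m -> 0 < m' -> m %% 5 \in [:: 1; 4] -> m' %% 5 \in [:: 1; 4] ->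
            al1 m = al1 m' -> m = m')
  (Hal1x : forall m, 0 < m -> m %% 5 \in [:: 1; 4] -> (al1 m != x1) && (al1 m != y1))
  (Hxy2 : x2 != y2)
  (Hal2 : forall m m', 0 < m -> 0 < m' -> m %% 5 \in [:: 2; 0] -> m' %% 5 \in [:: 2; 0] ->
            al2 m = al2 m' -> m = m')
  (Hal2x : forall m, 0 < m -> m %% 5 \in [:: 2; 0] -> (al2 m != x2) && (al2 m != y2))
  (Hxz3 : x3 != z3)
  (Hal3 : forall m m', 0 < m -> 0 < m' -> m %% 5 == 3 -> m' %% 5 == 3 ->
            al3 m = al3 m' -> m = m')
  (Hal3x : forall m, 0 < m -> m %% 5 == 3 -> (al3 m != x3) && (al3 m != z3))
  (n : nat) (Hn : 1 <= n) :
  let Dn1 := D x1 y1 x2 y2 x3 z3 al1 al2 al3 n.-1 in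
  let An := A x1 y1 x2 y2 x3 z3 al1 al2 al3 n in
  (forall S : seq (Omega X1 X2 X3), uniq S -> 1 <= size S -> {subset S <= An} ->
     size S <= size [seq c <- coords S | c \notin coords Dn1])
  /\
  (forall ai, ai \in Dn1 ->
   forall S : seq (Omega X1 X2 X3), uniq S -> 1 <= size S -> {subset S <= An} ->
     (size S).+1 <= size [seq c <- coords S | c \notin coords_pt ai]).
Proof.
move=> Dn1 An.
have N1 m : 0 < m -> m %% 5 \in [:: 1; 4] -> al1 m <> x1 /\ al1 m <> y1.
  by move=> h1 h2; case/andP: (Hal1x m h1 h2) => /eqP ? /eqP ?.
have N2 m : 0 < m -> m %% 5 \in [:: 2; 0] -> al2 m <> x2 /\ al2 m <> y2.
  by move=> h1 h2; case/andP: (Hal2x m h1 h2) => /eqP ? /eqP ?.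
have N3 m : 0 < m -> m %% 5 == 3 -> al3 m <> x3 /\ al3 m <> z3.
  by move=> h1 h2; case/andP: (Hal3x m h1 h2) => /eqP ? /eqP ?.
move/eqP: Hxy1 => Hxy1'; move/eqP: Hxy2 => Hxy2'; move/eqP: Hxz3 => Hxz3'.
set C : seq (Coord X1 X2 X3) := [:: inl (inl (al1 (5*n-4))); inl (inr (al2 (5*n-3)));
   inr (al3 (5*n-2)); inl (inl (al1 (5*n-1))); inl (inr (al2 (5*n)))].
have F2 i : 1 <= i <= 5 * n - 2 -> forall c, c \in C ->
    c \in coords_pt (a x1 y1 x2 y2 x3 z3 al1 al2 al3 i) -> False.
  move=> Hi c Hc; move: Hc; rewrite !inE => Hc.
  case: (leqP 4 i) => H4.
    rewrite aE //.
    have Hdiv := divn_eq (i + 1) 5.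
    have Hr : (i + 1) %% 5 < 5 by rewrite ltn_pmod.
    move: Hdiv Hr; set q := (i + 1) %/ 5; set r := (i + 1) %% 5 => Hdiv Hr.
    have Hq1 : 1 <= q by nlia.
    have Hqn : q <= n - 1 by nlia.
    clearbody q r.
    case: r Hr Hdiv => [|[|[|[|[|r]]]]] // Hr Hdiv; rewrite /pt /al3m7 /al2m8;
     try (case: (q =P 1) => Hq); move/in3;
     move: Hc => /orP[/eqP->|/orP[/eqP->|/orP[/eqP->|/orP[/eqP->|/eqP->]]]];
     case=> E; move: E => /= E; first [ discriminate E | case: E => E; kill Hal1 Hal2 Hal3 N1 N2 N3 E].
  case: i Hi H4 => [|[|[|[|i]]]] // Hi H4 => /in3;
   move: Hc => /orP[/eqP->|/orP[/eqP->|/orP[/eqP->|/orP[/eqP->|/eqP->]]]];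
   case=> E; first [ discriminate E | case: E => E; kill Hal1 Hal2 Hal3 N1 N2 N3 E].
have F2' c : c \in C -> c \notin coords Dn1.
  move=> Hc; apply/negP => /coordsP [p Hp Hcp]; case/inD: Hp => i Hi E; subst p.
  by apply: (F2 i _ c Hc Hcp); nlia.
have uniqC : uniq C.
  rewrite /C /=; repeat (apply/andP; split) => //; rewrite !inE;
  repeat (apply/norP; split); apply/eqP => E;
  first [ discriminate E | case: E => E; kill Hal1 Hal2 Hal3 N1 N2 N3 E].
set PL := [seq pt x1 y2 x3 z3 al1 al2 al3 n r | r <- iota 0 5].
have HS S : uniq S -> {subset S <= An} -> size S <= count (mem S) PL.
  move=> uS sS; rewrite -size_filter; apply: uniq_leq_size => // x xS.
  rewrite mem_filter; apply/andP; split; first exact: xS.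
  exact: F1 Hn (sS x xS).
have inc (S : seq (Omega X1 X2 X3)) p c : p \in S -> c \in coords_pt p -> c \in coords S.
  by move=> h1 h2; apply/coordsP; exists p.
have Hbound S : count (mem S) PL <= count (mem (coords S)) C.
  rewrite /=.
  apply: leq_trans (hallA _ _ _ _ _) _.
  repeat apply: leq_add => //;
  first [ apply: or_le2 | apply: or_le3 ] => H; apply: inc H _; by rewrite /= !inE eqxx ?orbT.
split.
  move=> S uS _ sS.
  apply: leq_trans (HS S uS sS) _.
  apply: leq_trans (Hbound S) _.
  rewrite -size_filter; apply: uniq_leq_size; first exact: filter_uniq.
  move=> x; rewrite !mem_filter => /andP [h1 h2]; apply/andP; split; [exact: F2' | exact: h1].
move=> ai Hai S uS HS1 sS.
case: ai Hai => [[u v] w] Hai.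
have F3 c : c \in C -> c \notin coords_pt (u, v, w).
  move=> Hc; apply/negP => h; apply: (negP (F2' c Hc)); apply/coordsP; exists (u, v, w) => //.
set CO : seq (Coord X1 X2 X3) := C ++ [:: inl (inl x1); inl (inr (al2m8 y2 al2 n)); inr x3; inr (al3m7 z3 al3 n)].
have uniqCO : uniq CO.
  rewrite /CO /C /al2m8 /al3m7 /=; case: (n =P 1) => Hn1;
  repeat (apply/andP; split) => //; rewrite !inE;
  repeat (apply/norP; split); apply/eqP => E;
  first [ discriminate E | case: E => E; kill Hal1 Hal2 Hal3 N1 N2 N3 E].
have g12 : (inl (inl x1) \notin coords_pt (u, v, w)) || (inl (inr (al2m8 y2 al2 n)) \notin coords_pt (u, v, w)).
  rewrite -negb_and; apply/negP => /andP [/in_cpt h1 /in_cpt h2].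
  case: h1 => E1 //; case: h2 => E2 //; case: E1 => E1; case: E2 => E2.
  rewrite -E1 -E2 in Hai.
  case/inD: Hai => i Hi E.
  have Ea := congr1 (fun p => p.1.1) E; have Eb := congr1 (fun p => p.1.2) E.
  move: Ea Eb {E}.
  case: (leqP 4 i) => H4.
    rewrite aE //.
    have Hdiv := divn_eq (i + 1) 5.
    have Hr : (i + 1) %% 5 < 5 by rewrite ltn_pmod.
    move: Hdiv Hr; set q := (i + 1) %/ 5; set r := (i + 1) %% 5 => Hdiv Hr.
    have Hq1 : 1 <= q by nlia.
    have Hqn : q <= n - 1 by nlia.
    clearbody q r.
    case: r Hr Hdiv => [|[|[|[|[|r]]]]] // Hr Hdiv; rewrite /pt /al3m7 /al2m8 /=;
     case: (q =P 1) => Hq; case: (n =P 1) => Hn1 Ea Eb;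
     first [ nlia | kill Hal1 Hal2 Hal3 N1 N2 N3 Ea | kill Hal1 Hal2 Hal3 N1 N2 N3 Eb].
  case: i Hi H4 => [|[|[|[|i]]]] // Hi H4; rewrite /al2m8 /=;
     case: (n =P 1) => Hn1 Ea Eb;
     first [ kill Hal1 Hal2 Hal3 N1 N2 N3 Ea | kill Hal1 Hal2 Hal3 N1 N2 N3 Eb].
have g34 : (inr x3 \notin coords_pt (u, v, w)) || (inr (al3m7 z3 al3 n) \notin coords_pt (u, v, w)).
  rewrite -negb_and; apply/negP => /andP [/in_cpt h1 /in_cpt h2].
  case: h1 => E1 //; case: h2 => E2 //; case: E1 => E1; case: E2 => E2.
  have E := etrans E1 (esym E2); move: E; rewrite /al3m7; case: (n =P 1) => Hn1 E;
  kill Hal1 Hal2 Hal3 N1 N2 N3 E.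
have pos : 0 < count (mem S) PL by apply: leq_trans HS1 (HS S uS sS).
apply: (@leq_trans (count (mem S) PL).+1); first by rewrite ltnS; apply: HS.
apply: (@leq_trans (count (fun c => (c \in coords S) && (c \notin coords_pt (u, v, w))) CO)).
  move: pos; rewrite /=.
  move=> pos; apply: leq_trans (hallB g12 g34 pos) _.
  repeat apply: leq_add => //;
  first [ apply: or_le2 | apply: or_le3 | apply: and_le ] => H; try (apply/andP; split);
  try (apply: F3; by rewrite !inE eqxx ?orbT);
  apply: inc H _; by rewrite /= !inE eqxx ?orbT.
rewrite -size_filter; apply: uniq_leq_size; first exact: filter_uniq.
move=> x; rewrite !mem_filter => /andP [/andP [h1 h2] h3]; apply/andP; split; [exact: h2 | exact: h1].
Qed.
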